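(* Let $k=3$, let $\{e_1,e_2,e_3\}$ be an orthonormal basis of $\mathbb{C}^3$, $u=(e_1+e_2+e_3)/\sqrt3$, $v=(e_1+e_3)/\sqrt2$, and let \[H=0,\quad L_0=e_1u^*,\quad L_1=2vv^*+e_2e_2^*,\quad C_2=ue_1^*,\] with $I_b=\{0,1\}$, $I_p=\{2\}$. Let $\mathcal{L}(\rho)=\sum_{i\in\{0,1\}}\big(L_i\rho L_i^*-\tfrac12\{L_i^*L_i,\rho\}\big)+C_2\rho C_2^*-\tfrac12\{C_2^*C_2,\rho\}$. Then condition ($\mathcal{L}$-erg) holds and the unique $\rho_{\mathrm{inv}}\in\mathcal{D}_3$ with $\mathcal{L}(\rho_{\mathrm{inv}})=0$ is positive definite.
   Context: $\mathcal{D}_3=\{\rho\in M_3(\mathbb{C}):\rho\ge0,\operatorname{tr}\rho=1\}$. Condition ($\mathcal{L}$-erg): there exists a unique nonzero minimal orthogonal projection $\pi$ such that $\mathcal{L}(\pi M_3(\mathbb{C})\pi)\subset\pi M_3(\mathbb{C})\pi$; it implies $\mathcal{L}$ has a unique zero in $\mathcal{D}_3$. *)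

(* Defs.v *)
(* C^3 is modelled as column vectors over C := R[i],
   for an arbitrary real closed field R (R = the real numbers is a special case). *)
From HB Require Import structures.
From mathcomp Require Import all_boot all_order all_algebra.
From mathcomp Require Import complex.
Set Implicit Arguments. Unset Strict Implicit. Unset Printing Implicit Defensive.
Import Order.TTheory GRing.Theory Num.Theory.
Local Open Scope ring_scope.

Section Defs.
Variable R : rcfType.
Local Notation C := (R[i]).

Definition adjmx (m n : nat) (A : 'M[C]_(m, n)) : 'M[C]_(n, m) :=
  (map_mx Num.conj A)^T.

(* positive semidefinite: x^* A x >= 0 for all x (over C this forces A = A^* ) *)
Definition psdmx (n : nat) (A : 'M[C]_n) : Prop :=
  forall x : 'cV[C]_n, 0 <= (adjmx x *m A *m x) 0 0.

Definition pdmx (n : nat) (A : 'M[C]_n) : Prop :=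
  forall x : 'cV[C]_n, x != 0 -> 0 < (adjmx x *m A *m x) 0 0.

Definition density (n : nat) (rho : 'M[C]_n) : Prop :=
  psdmx rho /\ \tr rho = 1.

Definition orth_proj (n : nat) (P : 'M[C]_n) : Prop :=
  P *m P = P /\ adjmx P = P.

Definition L_invariant (n : nat) (L : 'M[C]_n -> 'M[C]_n) (P : 'M[C]_n) : Prop :=
  forall X : 'M[C]_n, exists Y : 'M[C]_n, L (P *m X *m P) = P *m Y *m P.

Definition nonzero_invariant_proj (n : nat) (L : 'M[C]_n -> 'M[C]_n) (P : 'M[C]_n) :=
  orth_proj P /\ P != 0 /\ L_invariant L P.

(* minimal among nonzero invariant orthogonal projections, for the usual order
   of projections (Q <= P iff Q P = Q, i.e. range Q included in range P) *)
Definition minimal_invariant_proj (n : nat) (L : 'M[C]_n -> 'M[C]_n) (P : 'M[C]_n) :=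
  nonzero_invariant_proj L P /\
  forall Q : 'M[C]_n, nonzero_invariant_proj L Q -> Q *m P = Q -> Q = P.

Definition L_erg (n : nat) (L : 'M[C]_n -> 'M[C]_n) : Prop :=
  exists P : 'M[C]_n, minimal_invariant_proj L P /\
    forall Q : 'M[C]_n, minimal_invariant_proj L Q -> Q = P.

Definition dissip (n : nat) (A rho : 'M[C]_n) : 'M[C]_n :=
  A *m rho *m adjmx A
  - 2^-1 *: (adjmx A *m A *m rho + rho *m (adjmx A *m A)).

(* the orthonormal basis e_1, e_2, e_3 (indices 0,1,2) *)
Definition e3 (i : 'I_3) : 'cV[C]_3 := delta_mx i 0.

Definition u3 : 'cV[C]_3 := (2.-root (3 : C))^-1 *: (e3 0 + e3 1 + e3 2).
Definition v3 : 'cV[C]_3 := (2.-root (2 : C))^-1 *: (e3 0 + e3 2).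

Definition H0 : 'M[C]_3 := 0.
Definition L0 : 'M[C]_3 := e3 0 *m adjmx u3.
Definition L1 : 'M[C]_3 := 2 *: (v3 *m adjmx v3) + e3 1 *m adjmx (e3 1).
Definition C2 : 'M[C]_3 := u3 *m adjmx (e3 0).

Definition Lgen (rho : 'M[C]_3) : 'M[C]_3 :=
  - 'i *: (H0 *m rho - rho *m H0) + (dissip L0 rho + dissip L1 rho) + dissip C2 rho.

End Defs.

(* Main.v *)
Require Import Defs.
From HB Require Import structures.
From mathcomp Require Import all_boot all_order all_algebra.
From mathcomp Require Import complex ring.
Import Order.TTheory GRing.Theory Num.Theory.
Local Open Scope ring_scope.
Set Implicit Arguments. Unset Strict Implicit.

Section G.
Variable F : numClosedFieldType.

Ltac ord3 i := let i0 := fresh in let Hi := fresh in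
  case: i => [[|[|[|i0]]] Hi] //.

Definition adjF (m n : nat) (A : 'M[F]_(m, n)) : 'M[F]_(n, m) :=
  (map_mx Num.conj A)^T.
Definition dissF (n : nat) (A rho : 'M[F]_n) : 'M[F]_n :=
  A *m rho *m adjF A
  - 2^-1 *: (adjF A *m A *m rho + rho *m (adjF A *m A)).

Lemma adjFZ m n (y : F) (A : 'M[F]_(m, n)) : adjF (y *: A) = y^* *: adjF A.
Proof. by apply/matrixP => i j; rewrite !mxE rmorphM. Qed.

Lemma dissFZ n (y : F) (A rho : 'M[F]_n) : y^* = y ->
  dissF (y *: A) rho = (y * y) *: dissF A rho.
Proof.
move=> hy; rewrite /dissF adjFZ hy -?scalemxAl -?scalemxAr -?scalemxAl -?scalemxAr -?scalemxAl ?scalerA.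
by rewrite -scalerDr scalerA [_ * (y * y)]mulrC -[(y * y * 2^-1) *: _]scalerA -scalerBr.
Qed.

Lemma adjFM m n p (A : 'M[F]_(m, n)) (B : 'M[F]_(n, p)) :
  adjF (A *m B) = adjF B *m adjF A.
Proof. by rewrite /adjF map_mxM trmx_mul. Qed.

Lemma adjFB m n (A B : 'M[F]_(m, n)) : adjF (A - B) = adjF A - adjF B.
Proof. by rewrite /adjF map_mxB linearB. Qed.

Lemma adjF1 n : adjF (1%:M : 'M[F]_n) = 1%:M.
Proof. by rewrite /adjF map_mx1 trmx1. Qed.

Lemma trMMF n (M : 'M[F]_n) :
  \tr (M *m adjF M) = \sum_i \sum_j M i j * (M i j)^*.
Proof.
rewrite /mxtrace; apply: eq_bigr => i _; rewrite !mxE; apply: eq_bigr => j _.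
by rewrite !mxE.
Qed.

Lemma trMMF_ge0 n (M : 'M[F]_n) : 0 <= \tr (M *m adjF M).
Proof.
rewrite trMMF; apply: sumr_ge0 => i _; apply: sumr_ge0 => j _; exact: mul_conjC_ge0.
Qed.

Lemma trMMF_eq0 n (M : 'M[F]_n) : \tr (M *m adjF M) = 0 -> M = 0.
Proof.
rewrite trMMF => H; apply/matrixP => i j; rewrite mxE.
have H1 : forall i0, \sum_j M i0 j * (M i0 j)^* = 0.
  move=> i0; apply: (psumr_eq0P _ H) => // k _; apply: sumr_ge0 => l _; exact: mul_conjC_ge0.
have H2 : M i j * (M i j)^* = 0.
  apply: (psumr_eq0P _ (H1 i)) => // k _; exact: mul_conjC_ge0.
by apply/eqP; rewrite -mul_conjC_eq0 H2.
Qed.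

Lemma QdissQF n (A P Q : 'M[F]_n) : P *m P = P -> adjF P = P -> adjF Q = Q ->
  Q *m P = 0 -> P *m Q = 0 ->
  Q *m dissF A P *m Q = (Q *m A *m P) *m adjF (Q *m A *m P).
Proof.
move=> PP aP aQ QP PQ.
rewrite !adjFM aQ aP /dissF mulmxBr mulmxBl -scalemxAr -scalemxAl.
rewrite mulmxDr mulmxDl !mulmxA QP !mul0mx addr0.
rewrite -[_ *m P *m Q]mulmxA PQ mulmx0 scaler0 subr0.
by rewrite -[_ *m P *m P]mulmxA PP.
Qed.

Lemma sandw3F n (Q X Y Z : 'M[F]_n) (a b : F) :
  Q *m (a *: X + Y + b *: Z) *m Q = a *: (Q *m X *m Q) + Q *m Y *m Q + b *: (Q *m Z *m Q).
Proof. by rewrite !mulmxDr !mulmxDl -!scalemxAr -!scalemxAl. Qed.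

Lemma core3F n (B0 B1 B2 P Q Z : 'M[F]_n) :
  P *m P = P -> adjF P = P -> adjF Q = Q -> Q *m P = 0 -> P *m Q = 0 ->
  Z = 3^-1 *: dissF B0 P + dissF B1 P + 3^-1 *: dissF B2 P ->
  Q *m Z *m Q = 0 ->
  [/\ Q *m B0 *m P = 0, Q *m B1 *m P = 0 & Q *m B2 *m P = 0].
Proof.
move=> PP aP aQ QP PQ -> E.
set M0 := Q *m B0 *m P; set M1 := Q *m B1 *m P; set M2 := Q *m B2 *m P.
have {}E : 3^-1 *: (M0 *m adjF M0) + M1 *m adjF M1 + 3^-1 *: (M2 *m adjF M2) = 0.
  apply: etrans E; rewrite sandw3F; congr (_ *: _ + _ + _ *: _); symmetry; exact: QdissQF.
have T := congr1 mxtrace E; rewrite !mxtraceD !mxtraceZ mxtrace0 in T.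
have g3 : 0 <= (3 : F)^-1 by rewrite invr_ge0 ler0n.
have n3 : (3 : F)^-1 != 0 by rewrite invr_eq0 pnatr_eq0.
have a0 : 0 <= 3^-1 * \tr (M0 *m adjF M0) := mulr_ge0 g3 (trMMF_ge0 _).
have a1 : 0 <= \tr (M1 *m adjF M1) := trMMF_ge0 _.
have a2 : 0 <= 3^-1 * \tr (M2 *m adjF M2) := mulr_ge0 g3 (trMMF_ge0 _).
move/eqP: T; rewrite (paddr_eq0 (addr_ge0 a0 a1) a2) (paddr_eq0 a0 a1) !mulf_eq0 (negbTE n3) /=.
case/andP => /andP [/eqP t0 /eqP t1] /eqP t2.
by split; apply: trMMF_eq0.
Qed.
Definition M3 (a b c d e f g h k : F) : 'M[F]_3 :=
  \matrix_(i, j) nth 0 (nth [::] [:: [:: a; b; c]; [:: d; e; f]; [:: g; h; k]] i) j.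
Definition V3 (a b c : F) : 'cV[F]_3 := \col_i nth 0 [:: a; b; c] i.


Lemma M3_eta (A : 'M[F]_3) : A = M3 (A 0 0) (A 0 1) (A 0 2) (A 1 0) (A 1 1) (A 1 2) (A 2 0) (A 2 1) (A 2 2).
Proof.
apply/matrixP => i j; rewrite mxE.
by ord3 i; ord3 j; congr (A _ _); apply/val_inj.
Qed.

Lemma mulM3 a b c d e f g h k a' b' c' d' e' f' g' h' k' :
  M3 a b c d e f g h k *m M3 a' b' c' d' e' f' g' h' k' =
  M3 (a*a'+b*d'+c*g') (a*b'+b*e'+c*h') (a*c'+b*f'+c*k')
     (d*a'+e*d'+f*g') (d*b'+e*e'+f*h') (d*c'+e*f'+f*k')
     (g*a'+h*d'+k*g') (g*b'+h*e'+k*h') (g*c'+h*f'+k*k').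
Proof.
apply/matrixP => i j; ord3 i; ord3 j; by rewrite !mxE !big_ord_recl big_ord0 !mxE /= addr0 addrA.
Qed.

Lemma mulM3V3 a b c d e f g h k a' b' c' :
  M3 a b c d e f g h k *m V3 a' b' c' =
  V3 (a*a'+b*b'+c*c') (d*a'+e*b'+f*c') (g*a'+h*b'+k*c').
Proof.
apply/matrixP => i j; ord3 i; ord3 j; by rewrite !mxE !big_ord_recl big_ord0 !mxE /= addr0 addrA.
Qed.

Lemma addM3 a b c d e f g h k a' b' c' d' e' f' g' h' k' :
  M3 a b c d e f g h k + M3 a' b' c' d' e' f' g' h' k' =
  M3 (a+a') (b+b') (c+c') (d+d') (e+e') (f+f') (g+g') (h+h') (k+k').
Proof. by apply/matrixP => i j; ord3 i; ord3 j; rewrite !mxE. Qed.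

Lemma subM3 a b c d e f g h k a' b' c' d' e' f' g' h' k' :
  M3 a b c d e f g h k - M3 a' b' c' d' e' f' g' h' k' =
  M3 (a-a') (b-b') (c-c') (d-d') (e-e') (f-f') (g-g') (h-h') (k-k').
Proof. by apply/matrixP => i j; ord3 i; ord3 j; rewrite !mxE. Qed.

Lemma scaleM3 x a b c d e f g h k :
  x *: M3 a b c d e f g h k = M3 (x*a) (x*b) (x*c) (x*d) (x*e) (x*f) (x*g) (x*h) (x*k).
Proof. by apply/matrixP => i j; ord3 i; ord3 j; rewrite !mxE. Qed.

Lemma adjM3 a b c d e f g h k :
  adjF (M3 a b c d e f g h k) = M3 a^* d^* g^* b^* e^* h^* c^* f^* k^*.
Proof. by apply/matrixP => i j; ord3 i; ord3 j; rewrite !mxE. Qed.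

Lemma addV3 a b c a' b' c' : V3 a b c + V3 a' b' c' = V3 (a+a') (b+b') (c+c').
Proof. by apply/matrixP => i j; ord3 i; ord3 j; rewrite !mxE. Qed.
Lemma subV3 a b c a' b' c' : V3 a b c - V3 a' b' c' = V3 (a-a') (b-b') (c-c').
Proof. by apply/matrixP => i j; ord3 i; ord3 j; rewrite !mxE. Qed.
Lemma scaleV3 x a b c : x *: V3 a b c = V3 (x*a) (x*b) (x*c).
Proof. by apply/matrixP => i j; ord3 i; ord3 j; rewrite !mxE. Qed.

Lemma zeroM3 : (0 : 'M[F]_3) = M3 0 0 0 0 0 0 0 0 0.
Proof. by apply/matrixP => i j; ord3 i; ord3 j; rewrite !mxE. Qed.
Lemma oneM3 : (1 : 'M[F]_3) = M3 1 0 0 0 1 0 0 0 1.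
Proof. by apply/matrixP => i j; ord3 i; ord3 j; rewrite !mxE. Qed.
Lemma zeroV3 : (0 : 'cV[F]_3) = V3 0 0 0.
Proof. by apply/matrixP => i j; ord3 i; ord3 j; rewrite !mxE. Qed.

Lemma M3_inj a b c d e f g h k a' b' c' d' e' f' g' h' k' :
  M3 a b c d e f g h k = M3 a' b' c' d' e' f' g' h' k' ->
  a = a' /\ b = b' /\ c = c' /\ d = d' /\ e = e' /\ f = f' /\ g = g' /\ h = h' /\ k = k'.
Proof.
move/matrixP => H.
have := H 0 0; have := H 0 1; have := H 0 2; have := H 1 0; have := H 1 1;
have := H 1 2; have := H 2 0; have := H 2 1; have := H 2 2.
by rewrite !mxE /= => *; do !split.
Qed.

Lemma V3_inj a b c a' b' c' : V3 a b c = V3 a' b' c' -> [/\ a = a', b = b' & c = c'].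
Proof.
move/matrixP => H.
have := H 0 0; have := H 1 0; have := H 2 0.
by rewrite !mxE /= => *; split.
Qed.

Lemma trM3 a b c d e f g h k : \tr (M3 a b c d e f g h k) = a + e + k.
Proof. by rewrite /mxtrace !big_ord_recl big_ord0 !mxE /= addr0 addrA. Qed.


Definition A0 := M3 1 1 1 0 0 0 0 0 0.
Definition A1 := M3 1 0 1 0 1 0 1 0 1.
Definition A2 := M3 1 0 0 1 0 0 1 0 0.
Definition LgF (rho : 'M[F]_3) :=
  3^-1 *: dissF A0 rho + dissF A1 rho + 3^-1 *: dissF A2 rho.

Ltac getl h := lazymatch type of h with ?e = _ => e end.

Lemma uniqF r00 r01 r02 r10 r11 r12 r20 r21 r22 :
  LgF (M3 r00 r01 r02 r10 r11 r12 r20 r21 r22) = 0 -> r00 + r11 + r22 = 1 ->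
  M3 r00 r01 r02 r10 r11 r12 r20 r21 r22 = 3^-1 *: 1.
Proof.
move=> H ht; move: H.
rewrite /LgF /dissF /A0 /A1 /A2 !adjM3 ?conjC0 ?conjC1 !(mulM3, addM3, subM3, scaleM3) zeroM3.
move/M3_inj => [h1 [h2 [h3 [h4 [h5 [h6 [h7 [h8 h9]]]]]]]].
rewrite oneM3 scaleM3 !mulr1 !mulr0.
let E1 := getl h1 in let E2 := getl h2 in let E3 := getl h3 in
let E4 := getl h4 in let E5 := getl h5 in let E6 := getl h6 in
let E7 := getl h7 in let E8 := getl h8 in let E9 := getl h9 in
let T := getl ht in
let lc l1 l2 l3 l4 l5 l6 l7 l8 l9 mu :=
  (apply/eqP; rewrite -subr_eq0; apply/eqP;
  transitivity (l1*E1+l2*E2+l3*E3+l4*E4+l5*E5+l6*E6+l7*E7+l8*E8+l9*E9 + mu*(T-1));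
  [by field | by rewrite h1 h2 h3 h4 h5 h6 h7 h8 h9 ht subrr; ring]) in
congr M3; [ lc (-17/52 : F) (-23/156 : F) (5/156 : F) (-23/156 : F) (181/156 : F) (-53/156 : F) (5/156 : F) (-53/156 : F) (0 : F) (1/3 : F)
 | lc (1/52 : F) (-389/468 : F) (29/234 : F) (-25/468 : F) (25/52 : F) (-4/39 : F) (8/117 : F) (5/78 : F) (0 : F) (0 : F)
 | lc (-7/52 : F) (29/234 : F) (-799/936 : F) (8/117 : F) (-19/52 : F) (55/312 : F) (-461/936 : F) (29/312 : F) (0 : F) (0 : F)
 | lc (1/52 : F) (-25/468 : F) (8/117 : F) (-389/468 : F) (25/52 : F) (5/78 : F) (29/234 : F) (-4/39 : F) (0 : F) (0 : F)
 | lc (-9/52 : F) (49/156 : F) (-31/156 : F) (49/156 : F) (-467/156 : F) (79/156 : F) (-31/156 : F) (79/156 : F) (0 : F) (1/3 : F)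
 | lc (-9/52 : F) (-4/39 : F) (55/312 : F) (5/78 : F) (35/52 : F) (-151/104 : F) (29/312 : F) (-21/104 : F) (0 : F) (0 : F)
 | lc (-7/52 : F) (8/117 : F) (-461/936 : F) (29/234 : F) (-19/52 : F) (29/312 : F) (-799/936 : F) (55/312 : F) (0 : F) (0 : F)
 | lc (-9/52 : F) (5/78 : F) (29/312 : F) (-4/39 : F) (35/52 : F) (-21/104 : F) (55/312 : F) (-151/104 : F) (0 : F) (0 : F)
 | lc (1/2 : F) (-1/6 : F) (1/6 : F) (-1/6 : F) (11/6 : F) (-1/6 : F) (1/6 : F) (-1/6 : F) (0 : F) (1/3 : F) ].
Qed.

Lemma LgF_inv : LgF (3^-1 *: 1) = 0.
Proof.
rewrite oneM3 scaleM3 !mulr1 !mulr0.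
rewrite /LgF /dissF /A0 /A1 /A2 !adjM3 ?conjC0 ?conjC1 !(mulM3, addM3, subM3, scaleM3) zeroM3.
by congr M3; field.
Qed.

Lemma V3_eta (y : 'cV[F]_3) : y = V3 (y 0 0) (y 1 0) (y 2 0).
Proof.
apply/matrixP => i j; rewrite mxE; ord3 i; ord3 j; congr (y _ _); exact/val_inj.
Qed.

Lemma colP0 (P : 'M[F]_3) : P *m V3 1 0 0 = V3 (P 0 0) (P 1 0) (P 2 0).
Proof. by rewrite {1}[P]M3_eta mulM3V3; congr V3; ring. Qed.
Lemma colP1 (P : 'M[F]_3) : P *m V3 0 1 0 = V3 (P 0 1) (P 1 1) (P 2 1).
Proof. by rewrite {1}[P]M3_eta mulM3V3; congr V3; ring. Qed.
Lemma colP2 (P : 'M[F]_3) : P *m V3 0 0 1 = V3 (P 0 2) (P 1 2) (P 2 2).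
Proof. by rewrite {1}[P]M3_eta mulM3V3; congr V3; ring. Qed.

Section Fix.
Variable P : 'M[F]_3.
Hypothesis PP : P *m P = P.
Hypothesis h0 : A0 *m P = P *m A0 *m P.
Hypothesis h1 : A1 *m P = P *m A1 *m P.
Hypothesis h2 : A2 *m P = P *m A2 *m P.

Definition fixd (y : 'cV[F]_3) := P *m y = y.

Lemma fixA A (hA : A *m P = P *m A *m P) y : fixd y -> fixd (A *m y).
Proof.
rewrite /fixd => hy.
by rewrite -[in LHS]hy !mulmxA -hA -mulmxA hy.
Qed.

Lemma fixZ c y : fixd y -> fixd (c *: y).
Proof. by rewrite /fixd -scalemxAr => ->. Qed.

Lemma fixB y z : fixd y -> fixd z -> fixd (y - z).
Proof. by rewrite /fixd mulmxBr => -> ->. Qed.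

Lemma fixE y z : fixd y -> y = z -> fixd z.
Proof. by move=> h <-. Qed.

Lemma e_all : fixd (V3 1 0 0) -> fixd (V3 0 1 0) -> fixd (V3 0 0 1) -> P = 1.
Proof.
rewrite /fixd colP0 colP1 colP2.
move=> /V3_inj [a1 a2 a3] /V3_inj [a4 a5 a6] /V3_inj [a7 a8 a9].
by rewrite {1}[P]M3_eta a1 a2 a3 a4 a5 a6 a7 a8 a9 oneM3.
Qed.

Lemma ones_fixed : fixd (V3 1 1 1) -> P = 1.
Proof.
move=> f1.
have f0 : fixd (V3 1 0 0).
  apply: (fixE (fixZ 3^-1 (fixA h0 f1))).
  by rewrite /A0 mulM3V3 scaleV3; congr V3; field.
have f3 : fixd (V3 2 1 2) by apply: (fixE (fixA h1 f1)); rewrite /A1 mulM3V3; congr V3; ring.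
have f2 : fixd (V3 0 0 1).
  apply: (fixE (fixB (fixB f3 f1) f0)).
  by rewrite !subV3; congr V3; ring.
apply: e_all => //.
apply: (fixE (fixB (fixB f1 f0) f2)).
by rewrite !subV3; congr V3; ring.
Qed.

Lemma e0_fixed : fixd (V3 1 0 0) -> P = 1.
Proof.
move=> f0; apply: ones_fixed.
by apply: (fixE (fixA h2 f0)); rewrite /A2 mulM3V3; congr V3; ring.
Qed.

Lemma vec_fixed (y : 'cV[F]_3) : fixd y -> y != 0 -> P = 1.
Proof.
rewrite [y]V3_eta; move: (y 0 0) (y 1 0) (y 2 0) => a b c fy ny.
have [a0|a0] := eqVneq a 0.
  have [s0|s0] := eqVneq (a + b + c) 0.
    have b0 : b = - c by apply/eqP; rewrite -addr_eq0; move: s0; rewrite a0 add0r => ->.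
    have [c0|c0] := eqVneq c 0.
      by move: ny; rewrite a0 b0 c0 oppr0 zeroV3 eqxx.
    apply: ones_fixed.
    apply: (fixE (fixZ c^-1 (fixA h2 (fixA h1 fy)))).
    by rewrite /A1 /A2 !mulM3V3 scaleV3 a0 b0; congr V3; field.
  apply: e0_fixed.
  apply: (fixE (fixZ (a + b + c)^-1 (fixA h0 fy))).
  by rewrite /A0 mulM3V3 scaleV3; congr V3; field.
apply: ones_fixed.
apply: (fixE (fixZ a^-1 (fixA h2 fy))).
by rewrite /A2 mulM3V3 scaleV3; congr V3; field.
Qed.

Lemma proj_one : P != 0 -> P = 1.
Proof.
move=> nP.
have fc y : fixd (P *m y) by rewrite /fixd mulmxA PP.
have [c0|c0] := eqVneq (P *m V3 1 0 0) 0; last exact: vec_fixed (fc _) c0.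
have [c1|c1] := eqVneq (P *m V3 0 1 0) 0; last exact: vec_fixed (fc _) c1.
have [c2|c2] := eqVneq (P *m V3 0 0 1) 0; last exact: vec_fixed (fc _) c2.
move: c0 c1 c2; rewrite colP0 colP1 colP2 zeroV3.
move=> /V3_inj [a1 a2 a3] /V3_inj [a4 a5 a6] /V3_inj [a7 a8 a9].
by move: nP; rewrite {1}[P]M3_eta a1 a2 a3 a4 a5 a6 a7 a8 a9 -zeroM3 eqxx.
Qed.
End Fix.

Lemma psd_inv (x : 'cV[F]_3) : (adjF x *m (3^-1 *: 1) *m x) 0 0 = 3^-1 * \sum_i (x i 0)^* * x i 0.
Proof.
rewrite scalemx1 mul_mx_scalar -scalemxAl mxE; congr (_ * _).
by rewrite mxE; apply: eq_bigr => i _; rewrite !mxE.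
Qed.

Lemma sum_pos (x : 'cV[F]_3) : x != 0 -> 0 < \sum_i (x i 0)^* * x i 0.
Proof.
move=> nx; rewrite lt_def sumr_ge0 ?andbT; last by move=> i _; rewrite mulrC mul_conjC_ge0.
apply/eqP => H; move/eqP: nx; apply; apply/matrixP => i j.
rewrite mxE ord1.
have Hi : (x i 0)^* * x i 0 = 0.
  by apply: (psumr_eq0P _ H) => // k _; rewrite mulrC; exact: mul_conjC_ge0.
by move/eqP: Hi; rewrite mulrC mul_conjC_eq0 => /eqP.
Qed.

Lemma keyF (L : 'M[F]_3 -> 'M[F]_3) (P : 'M[F]_3) :
  (forall X, L X = LgF X) -> P *m P = P -> adjF P = P -> P != 0 ->
  (forall X, exists Y, L (P *m X *m P) = P *m Y *m P) -> P = 1.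
Proof.
move=> HL PP aP nP /(_ 1) [Y]; rewrite mulmx1 PP => HY.
have QP : (1 - P) *m P = 0 by rewrite mulmxBl mul1mx PP subrr.
have PQ : P *m (1 - P) = 0 by rewrite mulmxBr mulmx1 PP subrr.
have aQ : adjF (1 - P) = 1 - P by rewrite adjFB adjF1 aP.
have E : (1 - P) *m L P *m (1 - P) = 0 by rewrite HY !mulmxA QP !mul0mx.
have key : forall A : 'M[F]_3, (1 - P) *m A *m P = 0 -> A *m P = P *m A *m P.
  by move=> A; rewrite !mulmxBl !mul1mx => /eqP; rewrite subr_eq0 => /eqP.
have [/key h0 /key h1 /key h2] := core3F PP aP aQ QP PQ (HL P) E.
exact: proj_one PP h0 h1 h2 nP.
Qed.
End G.

Section S.
Variable R : rcfType.
Local Notation C := (R[i]).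
Local Notation M3 := (@M3 C).
Local Notation V3 := (@V3 C).
Local Notation A0 := (@A0 C).
Local Notation A1 := (@A1 C).
Local Notation A2 := (@A2 C).

Ltac ord3 i := let i0 := fresh in let Hi := fresh in
  case: i => [[|[|[|i0]]] Hi] //.

Lemma rootinv_facts (n : nat) : (0 < n)%N ->
  let x := (2.-root (n%:R : C))^-1 in x^* = x /\ x * x = n%:R^-1 /\ x != 0.
Proof.
move=> n0 x.
have s0 : 0 <= 2.-root (n%:R : C) by rewrite rootC_ge0 // ler0n.
have ss : 2.-root (n%:R : C) * 2.-root (n%:R : C) = n%:R by rewrite -expr2 rootCK.
have sn0 : 2.-root (n%:R : C) != 0 by rewrite rootC_eq0 // pnatr_eq0 -lt0n.
split; first by rewrite /x fmorphV /= (geC0_conj s0).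
split; first by rewrite /x -invfM ss.
by rewrite /x invr_eq0.
Qed.

Definition xs : C := (2.-root (3 : C))^-1.
Lemma xs_conj : xs^* = xs. Proof. by case: (rootinv_facts (n:=3) erefl). Qed.
Lemma xs_sq : xs * xs = 3^-1. Proof. by case: (rootinv_facts (n:=3) erefl) => _ []. Qed.
Lemma xs_neq0 : xs != 0. Proof. by case: (rootinv_facts (n:=3) erefl) => _ []. Qed.


Lemma L0E : L0 R = xs *: A0.
Proof.
apply/matrixP => i j; ord3 i; ord3 j; rewrite !mxE big_ord1 !mxE /= ?rmorphM /= ?xs_conj ?rmorphD /= ?rmorph1 ?rmorph0 /=; ring.
Qed.
Definition ys : C := (2.-root (2 : C))^-1.
Lemma ys_conj : ys^* = ys. Proof. by case: (rootinv_facts (n:=2) erefl). Qed.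
Lemma ys_sq : ys * ys = 2^-1. Proof. by case: (rootinv_facts (n:=2) erefl) => _ []. Qed.

Lemma two_half : (2 : C) * 2^-1 = 1.
Proof. by rewrite mulfV // pnatr_eq0. Qed.

Lemma L1E : L1 R = A1.
Proof.
apply/matrixP => i j; ord3 i; ord3 j; rewrite !mxE !big_ord1 !mxE /= ?rmorphM /= ?ys_conj ?rmorphD /= ?rmorph1 ?rmorph0 /=;
  rewrite ?mulr0 ?mul0r ?addr0 ?add0r ?mulr1 ?mul1r -?mulrA ?ys_sq ?two_half //;
  by rewrite ?mulr0 ?mul0r ?mulr0 ?mul0r ?mulr0 ?addr0 ?add0r.
Qed.

Lemma C2E : C2 R = xs *: A2.
Proof.
apply/matrixP => i j; ord3 i; ord3 j; rewrite !mxE big_ord1 !mxE /= ?rmorphM /= ?xs_conj ?rmorphD /= ?rmorph1 ?rmorph0 /= /xs; ring.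
Qed.

Lemma adjmxF m n (A : 'M[C]_(m,n)) : adjmx A = adjF A.
Proof. reflexivity. Qed.
Lemma dissipF (A rho : 'M[C]_3) : dissip A rho = dissF A rho.
Proof. reflexivity. Qed.

Lemma LgenE' (rho : 'M[C]_3) :
  Lgen rho = 3^-1 *: dissF A0 rho + dissF A1 rho + 3^-1 *: dissF A2 rho.
Proof.
rewrite /Lgen /H0 mul0mx mulmx0 subr0 scaler0 add0r !dissipF L0E L1E C2E.
move: xs_conj xs_sq; move: A0 A1 A2 xs => B0 B1 B2 x hx hxx.
by rewrite !dissFZ // hxx.
Qed.

Lemma LgenE (rho : 'M[C]_3) : Lgen rho = LgF rho.
Proof. by rewrite LgenE'.
Qed.


End S.

Unset Implicit Arguments. Set Strict Implicit.

Theorem proposition5p1 (R : rcfType) :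
  L_erg (@Lgen R) /\
  exists rho_inv : 'M[R[i]]_3,
    [/\ density rho_inv, Lgen rho_inv = 0,
        (forall rho : 'M[R[i]]_3, density rho -> Lgen rho = 0 -> rho = rho_inv)
      & pdmx rho_inv].
Proof.
have key : forall Q : 'M[R[i]]_3, nonzero_invariant_proj (@Lgen R) Q -> Q = 1.
  move=> Q [[PP aP] [nQ inv]].
  exact: (keyF (@LgenE R) PP aP nQ inv).
have inv1 : nonzero_invariant_proj (@Lgen R) 1.
  split; first by split; [rewrite mulmx1 | exact: adjF1].
  split; first exact: oner_neq0.
  by move=> X; exists (Lgen X); rewrite mul1mx mulmx1 mul1mx mulmx1.
split.
  exists 1; split; first by split => // Q hQ _; exact: key.
  by move=> Q [hQ _]; exact: key.
have g3 : 0 < (3 : R[i])^-1 by rewrite invr_gt0 ltr0n.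
exists (3^-1 *: 1); split.
- split; last by rewrite mxtraceZ mxtrace1 mulVf // pnatr_eq0.
  move=> x; rewrite adjmxF psd_inv.
  apply: mulr_ge0; first exact: ltW.
  by apply: sumr_ge0 => i _; rewrite mulrC mul_conjC_ge0.
- by rewrite LgenE LgF_inv.
- move=> rho [_ tr1] H.
  rewrite {1}[rho]M3_eta; apply: uniqF.
    by rewrite -LgenE -M3_eta.
  by move: tr1; rewrite {1}[rho]M3_eta trM3.
- move=> x nx; rewrite adjmxF psd_inv.
  by rewrite mulr_gt0 // sum_pos.
Qed.
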